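(* Let $C$ be a ring with vertices $v_0,\dots,v_{n-1}$ ($n\ge 3$), edges $e_i=(v_i,v_{i+1})$ for $i\in\{0,\dots,n-2\}$ and $e_{n-1}=(v_{n-1},v_0)$, positive edge weights $w$, and homebase $v_0$, and let $q\ge 0$ be the invoking cost. For each $i\in\{0,\dots,n-1\}$ let $C_i=C\setminus e_i$ (a path). For $i\in\{1,\dots,n-2\}$ let $v_i^{\min}$ (resp. $v_i^{\max}$) be the vertex among $v_i,v_{i+1}$ whose distance $d_{C_i}(v_0,\cdot)$ in $C_i$ is smaller (resp. larger). Set $c_0=q+w(C_0)$, $c_{n-1}=q+w(C_{n-1})$, and for $i\in\{1,\dots,n-2\}$ set $c_i=\min\{2q+w(C_i),\; q+d_{C_i}(v_0,v_i^{\min})+w(C_i)\}$. Let $i^*$ be an index minimizing $c_i$. Define the strategy $\mathcal{S}$ (procedure RingOffline) as follows: invoke an agent $a_1$ at $v_0$; if $i^*=0$, $a_1$ traverses the path $C_0$ from $v_0$ to $v_1$; if $i^*=n-1$, $a_1$ traverses the path $C_{n-1}$ from $v_0$ to $v_{n-1}$; if $1\le i^*\le n-2$ and $2q+w(C_{i^*})<q+d_{C_{i^*}}(v_0,v^{\min}_{i^*})+w(C_{i^*})$, then $a_1$ traverses the path in $C_{i^*}$ from $v_0$ to $v^{\min}_{i^*}$, a second agent $a_2$ is invoked at $v_0$ and traverses the path in $C_{i^*}$ from $v_0$ to $v^{\max}_{i^*}$; otherwise (with $1\le i^*\le n-2$) $a_1$ traverses the path in $C_{i^*}$ from $v_0$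 to $v^{\min}_{i^*}$ and then the path in $C_{i^*}$ from $v^{\min}_{i^*}$ to $v^{\max}_{i^*}$. Then $\mathcal{S}$ explores $C$ and is cost-optimal, i.e., its cost is minimum among all strategies exploring $C$.
   Context: Exploration model: a connected undirected graph with positive edge weights $w$ and a designated homebase vertex is given, together with an invoking cost $q\ge 0$. A strategy is a finite sequence of moves, each either (1) invoking a new agent, which appears at the homebase, or (2) an agent traversing an edge incident to its current vertex. A vertex is explored when it is visited for the first time; a strategy explores the graph if every vertex is visited by at least one agent (agents need not return to the homebase). If a strategy uses $k$ agents and agent $i$ traverses a total distance $d_i$ (sum of weights of the edges it traverses, with multiplicity), its cost is $kq+\sum_{i=1}^k d_i$. A strategy is cost-optimal (off-line setting, graph known in advance) if it explores the graph with minimum cost. For a subgraph $H$, $w(H)$ is the sum of the weights of its edges; $d_H(u,v)$ is the weighted shortest-path distance in $H$. *)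

(* Defs.v *)
From mathcomp Require Import all_boot all_order all_algebra.
Set Implicit Arguments. Unset Strict Implicit. Unset Printing Implicit Defensive.
Import Order.TTheory GRing.Theory Num.Theory.
Local Open Scope ring_scope.

(* A (simple, undirected) weighted graph on a finite vertex type V is given by
   an adjacency relation [adj] and a weight function [wt] (wt x y is the
   weight of the edge {x,y} when adj x y). *)

Section Model.
Variables (R : realFieldType) (V : finType).

(* A move: invoke a new agent (it appears at the homebase), or let agent
   number k (agents are numbered 0,1,... in order of invocation) traverse the
   edge from its current vertex to the adjacent vertex v. *)
Inductive move := Invoke | Step of nat & V.

(* state: positions of the agents, list of visited vertices, total distance *)
Definition mstate := (seq V * seq V * R)%type.

Definition step_state (adj : rel V) (wt : V -> V -> R) (h : V)
    (st : option mstate) (m : move) : option mstate :=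
  match st with
  | None => None
  | Some (pos, vis, d) =>
    match m with
    | Invoke => Some (rcons pos h, h :: vis, d)
    | Step k v =>
      if (k < size pos)%N && adj (nth h pos k) v then
        Some (set_nth h pos k v, v :: vis, d + wt (nth h pos k) v)
      else None
    end
  end.

Definition run adj wt h (S : seq move) : option mstate :=
  foldl (step_state adj wt h) (Some ([::], [::], 0)) S.

Definition explores adj wt h (S : seq move) : Prop :=
  exists pos vis d, run adj wt h S = Some (pos, vis, d) /\ forall v : V, v \in vis.

(* cost = k q + sum of distances travelled (meaningful for legal strategies) *)
Definition cost adj wt h (q : R) (S : seq move) : R :=
  match run adj wt h S with
  | Some (pos, _, d) => q * (size pos)%:R + d
  | None => 0
  end.

Fixpoint walk_wt (wt : V -> V -> R) (u : V) (p : seq V) : R :=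
  match p with [::] => 0 | v :: p' => wt u v + walk_wt wt v p' end.

Definition is_dist (adj : rel V) (wt : V -> V -> R) (u v : V) (d : R) : Prop :=
  (exists p, path adj u p /\ last u p = v /\ walk_wt wt u p = d) /\
  (forall p, path adj u p -> last u p = v -> d <= walk_wt wt u p).

End Model.
Arguments Invoke {V}.

Lemma ring_pos n : (2 < n)%N -> (0 < n)%N.
Proof. by move=> H; apply: leq_trans H. Qed.

Section Ring.
Variables (R : realFieldType) (n : nat) (Hn : (2 < n)%N).

Definition vtx (k : nat) : 'I_n := Ordinal (ltn_pmod k (ring_pos Hn)).
Definition hb : 'I_n := vtx 0.

(* edge e_i = (v_i, v_(i+1 mod n)) *)
Definition ring_adj : rel 'I_n := fun x y => (y == ordS x) || (x == ordS y).
Definition ring_wt (w : 'I_n -> R) (x y : 'I_n) : R :=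
  if y == ordS x then w x else if x == ordS y then w y else 0.

Definition ringC_adj (i : 'I_n) : rel 'I_n := fun x y =>
  ring_adj x y && ~~ (((x == i) && (y == ordS i)) || ((y == i) && (x == ordS i))).

Definition wC (w : 'I_n -> R) (i : 'I_n) : R := \sum_(k < n | k != i) w k.

(* v_i^min : lo i = true means v_i^min = v_i (and v_i^max = v_(i+1)),
   lo i = false means v_i^min = v_(i+1) (and v_i^max = v_i). *)
Definition vmin (lo : 'I_n -> bool) (i : 'I_n) : 'I_n :=
  if lo i then i else ordS i.

Definition ring_c (w : 'I_n -> R) (q : R) (dC : 'I_n -> 'I_n -> R)
    (lo : 'I_n -> bool) (i : 'I_n) : R :=
  if ((i : nat) == 0%N) || ((i : nat) == n.-1) then q + wC w i
  else Num.min (q *+ 2 + wC w i) (q + dC i (vmin lo i) + wC w i).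

Definition fwd (a j : nat) : seq (move 'I_n) := [seq Step a (vtx t) | t <- iota 1 j].
Definition bwd (a j : nat) : seq (move 'I_n) := [seq Step a (vtx (n - t)) | t <- iota 1 (n - j)].
Definition back_to0 (a i : nat) : seq (move 'I_n) := [seq Step a (vtx (i - t)) | t <- iota 1 i].
Definition fwd_to0 (a i : nat) : seq (move 'I_n) := [seq Step a (vtx t) | t <- iota i.+2 (n - i.+1)].

Definition ringOffline (w : 'I_n -> R) (q : R) (dC : 'I_n -> 'I_n -> R)
    (lo : 'I_n -> bool) (ist : 'I_n) : seq (move 'I_n) :=
  let i := (ist : nat) in
  if i == 0%N then Invoke :: bwd 0 1
  else if i == n.-1 then Invoke :: fwd 0 n.-1
  else
    let to_min a := if lo ist then fwd a i else bwd a i.+1 in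
    let to_max a := if lo ist then bwd a i.+1 else fwd a i in
    if q *+ 2 + wC w ist < q + dC ist (vmin lo ist) + wC w ist then
      Invoke :: to_min 0%N ++ Invoke :: to_max 1%N
    else
      Invoke :: to_min 0%N ++
      (if lo ist then back_to0 0 i ++ bwd 0 i.+1 else fwd_to0 0 i ++ fwd 0 i).

End Ring.

(* Main.v *)
Require Import Defs.
From mathcomp Require Import all_boot all_order all_algebra.
From mathcomp Require Import zify ring lra.
Set Implicit Arguments. Unset Strict Implicit. Unset Printing Implicit Defensive.
Import Order.TTheory GRing.Theory Num.Theory.
Local Open Scope ring_scope.

Section Basic.
Variables (R : realFieldType) (n : nat) (Hn : (2 < n)%N) (w : 'I_n -> R).
Hypothesis w_pos : forall i, 0 < w i.

Lemma valS (x : 'I_n) : (ordS x : nat) = if x.+1 == n then 0%N else x.+1.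
Proof.
rewrite /= ; case: eqP => [->|h]; first by rewrite modnn.
by rewrite modn_small //; have := ltn_ord x; lia.
Qed.

Lemma val_vtx k : (vtx Hn k : nat) = (k %% n)%N.
Proof. by []. Qed.

Lemma vtx_val (x : 'I_n) : vtx Hn x = x.
Proof. by apply: val_inj; rewrite /= modn_small. Qed.

Lemma vtxS k : vtx Hn k.+1 = ordS (vtx Hn k).
Proof. by apply: val_inj; rewrite /= -[(k %% n).+1]addn1 modnDml addn1. Qed.

Lemma vtxn : vtx Hn n = hb Hn.
Proof. by apply: val_inj; rewrite /= modnn mod0n. Qed.

Lemma hb0 : (hb Hn : nat) = 0%N.
Proof. by rewrite /= mod0n. Qed.

Lemma ordSS (x : 'I_n) : ordS (ordS x) != x.
Proof.
apply/eqP => h; have h' : nat_of_ord (ordS (ordS x)) = nat_of_ord x by rewrite h.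
move: h'; rewrite !valS; have := ltn_ord x.
case: (x.+1 =P n) => h1 /=; first by rewrite h1 /=; case: (1 =P n) => * /=; lia.
by case: (x.+2 =P n) => h2 /= => *; lia.
Qed.

Lemma ring_wt_fwd (x y : 'I_n) : y = ordS x -> ring_wt w x y = w x.
Proof. by move=> ->; rewrite /ring_wt eqxx. Qed.

Lemma ring_wt_bwd (x y : 'I_n) : x = ordS y -> ring_wt w x y = w y.
Proof.
move=> ->; rewrite /ring_wt eqxx; case: eqP => // h.
by have := ordSS y; rewrite -h eqxx.
Qed.

Lemma ring_wt_ge0 x y : 0 <= ring_wt w x y.
Proof. rewrite /ring_wt; case: ifP => _; first exact: ltW. by case: ifP => _; [exact: ltW|exact: lexx]. Qed.

Definition Rs (m : nat) : R := \sum_(k < n | (k < m)%N) w k.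
Definition W : R := \sum_(k < n) w k.

Lemma Rs0 : Rs 0 = 0.
Proof. by rewrite /Rs big_pred0. Qed.

Lemma Rsn : Rs n = W.
Proof. by rewrite /Rs; apply: eq_bigl => k; rewrite ltn_ord. Qed.

Lemma RsS_ord (x : 'I_n) : Rs x.+1 = Rs x + w x.
Proof.
rewrite /Rs (bigD1 x) //= addrC; congr (_ + _); apply: eq_bigl => k.
rewrite ltnS leq_eqVlt -val_eqE /=; by case: ltngtP.
Qed.

Lemma RsS t : (t < n)%N -> Rs t.+1 = Rs t + w (vtx Hn t).
Proof.
move=> ht; have -> : t = vtx Hn t by rewrite /= modn_small.
by rewrite RsS_ord /= modn_small.
Qed.

Lemma Rs_ge0 m : 0 <= Rs m.
Proof. by apply: sumr_ge0 => k _; apply: ltW. Qed.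

Lemma Rs_mono m1 m2 : (m1 <= m2)%N -> Rs m1 <= Rs m2.
Proof.
move=> h; rewrite /Rs [X in _ <= X](bigID (fun k : 'I_n => (k < m1)%N)) /=.
rewrite -[X in X <= _]addr0 lerD //.
  rewrite le_eqVlt; apply/orP; left; apply/eqP; apply: eq_bigl => k.
  apply/idP/idP => [h1|/andP[] //]; rewrite h1 andbT; lia.
by apply: sumr_ge0 => k _; apply: ltW.
Qed.

Lemma Rs_leW m : Rs m <= W.
Proof.
rewrite -Rsn; case: (leqP m n) => h; first exact: Rs_mono.
by rewrite le_eqVlt; apply/orP; left; apply/eqP; apply: eq_bigl => k; have := ltn_ord k; lia.
Qed.

Lemma wC_eq (i : 'I_n) : wC w i = W - w i.
Proof. rewrite /W (bigD1 i) //= /wC; ring. Qed.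


Definition X (c : nat) (v : 'I_n) : R := if (v <= c)%N then Rs v else Rs v - W.

Lemma X_fwd c (x : 'I_n) : (c < n)%N -> (x : nat) <> c -> X c (ordS x) = X c x + w x.
Proof.
move=> hc hx; rewrite /X valS; have hxn := ltn_ord x.
case: (x.+1 =P n) => h.
  rewrite Rs0 leq0n; have -> : (x <= c)%N = false by apply/negbTE; rewrite -ltnNge; lia.
  have := RsS_ord x; rewrite h Rsn => ->; ring.
case: (leqP x.+1 c) => h1.
  by rewrite (ltnW h1) RsS_ord.
have -> : (x <= c)%N = false by apply/negbTE; rewrite -ltnNge; lia.
rewrite RsS_ord; ring.
Qed.

Lemma X_edge (c : 'I_n) x y : ringC_adj c x y -> `|X c y - X c x| <= ring_wt w x y.
Proof.
rewrite /ringC_adj /ring_adj => /andP[hxy hn]; case/orP: hxy => /eqP e.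
  have hx : x != c by apply/negP => /eqP hx; move: hn; rewrite e hx !eqxx.
  rewrite e X_fwd ?ltn_ord //; last by move=> h; move/negP: hx; apply; apply/eqP/val_inj.
  rewrite (ring_wt_fwd (erefl _)) addrC addKr ger0_norm //; exact: ltW.
have hy : y != c by apply/negP => /eqP hy; move: hn; rewrite e hy !eqxx orbT.
rewrite e X_fwd ?ltn_ord //; last by move=> h; move/negP: hy; apply; apply/eqP/val_inj.
rewrite (ring_wt_bwd (erefl _)) (_ : X c y - (X c y + w y) = - w y); last ring.
rewrite normrN ger0_norm //; exact: ltW.
Qed.

Lemma X_walk (c : 'I_n) p u : path (ringC_adj c) u p ->
  `|X c (last u p) - X c u| <= walk_wt (ring_wt w) u p.
Proof.
elim: p u => [|x p IH] u /=; first by rewrite subrr normr0.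
move=> /andP[e hp]; have := IH x hp; have := X_edge e => h1 h2.
rewrite (_ : X c (last x p) - X c u = (X c (last x p) - X c x) + (X c x - X c u)); last ring.
apply: le_trans (ler_normD _ _) _; rewrite addrC; exact: lerD.
Qed.

Lemma tele (adj : rel 'I_n) (f : nat -> 'I_n) (g : nat -> R) m j :
 (forall t, (m <= t < m + j)%N -> adj (f t) (f t.+1) /\ ring_wt w (f t) (f t.+1) = g t.+1 - g t) ->
 [/\ path adj (f m) [seq f t | t <- iota m.+1 j],
     last (f m) [seq f t | t <- iota m.+1 j] = f (m + j)%N &
     walk_wt (ring_wt w) (f m) [seq f t | t <- iota m.+1 j] = g (m + j)%N - g m].
Proof.
elim: j m => [|j IH] m H /=; first by rewrite addn0 subrr.
have [h1 h2 h3] := IH m.+1 (fun t ht => H t (ltac:(lia))).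
have [e1 e2] := H m (ltac:(lia)).
rewrite e1 h1 h2 h3 e2 addSnnS; split => //; ring.
Qed.

Lemma run_walk a (pos vis : seq 'I_n) d u p : (a < size pos)%N -> nth (hb Hn) pos a = u ->
  path (ring_adj (n:=n)) u p ->
  exists pos', [/\ size pos' = size pos, nth (hb Hn) pos' a = last u p &
  foldl (step_state (ring_adj (n:=n)) (ring_wt w) (hb Hn)) (Some (pos, vis, d)) [seq Step a x | x <- p]
   = Some (pos', rev p ++ vis, d + walk_wt (ring_wt w) u p)].
Proof.
elim: p u pos vis d => [|x p IH] u pos vis d ha hu /=.
  by move=> _; exists pos; rewrite addr0.
move=> /andP[e hp]; rewrite ha hu e /=.
have ha' : (a < size (set_nth (hb Hn) pos a x))%N by rewrite size_set_nth; lia.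
have hu' : nth (hb Hn) (set_nth (hb Hn) pos a x) a = x by rewrite nth_set_nth /= eqxx.
have [pos' [s1 s2 s3]] := IH x _ (x :: vis) (d + ring_wt w u x) ha' hu' hp.
exists pos'; split => //; first by rewrite s1 size_set_nth; lia.
by rewrite s3 rev_cons cat_rcons addrA.
Qed.


Lemma fwd_tele (adj : rel 'I_n) s j : (s + j <= n)%N ->
  (forall t, (s <= t < s + j)%N -> adj (vtx Hn t) (vtx Hn t.+1)) ->
  [/\ path adj (vtx Hn s) [seq vtx Hn t | t <- iota s.+1 j],
      last (vtx Hn s) [seq vtx Hn t | t <- iota s.+1 j] = vtx Hn (s + j) &
      walk_wt (ring_wt w) (vtx Hn s) [seq vtx Hn t | t <- iota s.+1 j] = Rs (s + j) - Rs s].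
Proof.
move=> hj H; apply: (tele (f := vtx Hn) (g := Rs)) => t ht; split; first exact: H.
rewrite (ring_wt_fwd (vtxS _)) RsS; first ring. lia.
Qed.

Lemma bwd_tele (adj : rel 'I_n) s j : (j <= s <= n)%N ->
  (forall m, (s - j <= m < s)%N -> adj (vtx Hn m.+1) (vtx Hn m)) ->
  [/\ path adj (vtx Hn (s - 0)) [seq vtx Hn (s - t) | t <- iota 1 j],
      last (vtx Hn (s - 0)) [seq vtx Hn (s - t) | t <- iota 1 j] = vtx Hn (s - j) &
      walk_wt (ring_wt w) (vtx Hn (s - 0)) [seq vtx Hn (s - t) | t <- iota 1 j] = Rs s - Rs (s - j)].
Proof.
move=> hj H.
have HH : forall t, (0 <= t < 0 + j)%N -> adj (vtx Hn (s - t)) (vtx Hn (s - t.+1)) /\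
   ring_wt w (vtx Hn (s - t)) (vtx Hn (s - t.+1)) = - Rs (s - t.+1) - - Rs (s - t).
  move=> t ht; have e : (s - t = (s - t.+1).+1)%N by lia.
  rewrite e; split; first by apply: H; lia.
  rewrite (ring_wt_bwd (vtxS _)) RsS; first ring. lia.
have [h1 h2 h3] := tele (f := fun t => vtx Hn (s - t)) (g := fun t => - Rs (s - t)) HH.
rewrite add0n in h2 h3; split => //; rewrite h3 [in - Rs (s - 0)]subn0; ring.
Qed.

Lemma adjC_fwd (i : 'I_n) t : (t < n)%N -> t <> i -> ringC_adj i (vtx Hn t) (vtx Hn t.+1).
Proof.
move=> ht hti; rewrite vtxS /ringC_adj /ring_adj eqxx /=.
have -> : (vtx Hn t == i) = false.
  by apply/negbTE/negP => /eqP /(congr1 (@nat_of_ord n)); rewrite /= modn_small.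
rewrite /=; apply/negP => /andP[/eqP h1 /eqP h2].
by have := ordSS i; rewrite -h2 h1 eqxx.
Qed.

Lemma adjC_bwd (i : 'I_n) t : (t < n)%N -> t <> i -> ringC_adj i (vtx Hn t.+1) (vtx Hn t).
Proof.
move=> ht hti; rewrite vtxS /ringC_adj /ring_adj eqxx orbT /=.
have -> : (vtx Hn t == i) = false.
  by apply/negbTE/negP => /eqP /(congr1 (@nat_of_ord n)); rewrite /= modn_small.
rewrite /= orbF; apply/negP => /andP[/eqP h1 /eqP h2].
by have := ordSS i; rewrite -h2 h1 eqxx.
Qed.

Lemma adj_fwd t : ring_adj (vtx Hn t) (vtx Hn t.+1).
Proof. by rewrite vtxS /ring_adj eqxx. Qed.

Lemma adj_bwd t : ring_adj (vtx Hn t.+1) (vtx Hn t).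
Proof. by rewrite vtxS /ring_adj eqxx orbT. Qed.

Lemma all_set_nth (P : pred 'I_n) (s : seq 'I_n) k v :
  (k < size s)%N -> all P s -> P v -> all P (set_nth (hb Hn) s k v).
Proof.
elim: s k => [|x s IH] [|k] //= hk /andP[hx hs] hv; first by rewrite hv hs.
by rewrite hx IH.
Qed.

End Basic.




Lemma ar_in (R : realFieldType) (Xv Xp t s d : R) : - t <= Xv - Xp -> Xv - Xp <= t ->
  (s - Xp <= d \/ s + Xp <= d) -> (s - Xv <= d + t \/ s + Xv <= d + t).
Proof. by move=> h1 h2 [] h; [left|right]; lra. Qed.

Lemma ar_fwd (R : realFieldType) (A B t d : R) : 0 <= B ->
  ((A + B) *+ 2 - B <= d \/ (A + B) *+ 2 + B <= d) ->
  (A + (B + t)) *+ 2 - (B + t) <= d + t.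
Proof. by rewrite !mulr2n => h [] h'; lra. Qed.

Lemma ar_bwd (R : realFieldType) (W Re Re1 B t d : R) : Re = Re1 + t -> Re <= W ->
  ((W - Re + B) *+ 2 - - (W - Re) <= d \/ (W - Re + B) *+ 2 + - (W - Re) <= d) ->
  (W - Re1 + B) *+ 2 + (Re1 - W) <= d + t.
Proof. by rewrite !mulr2n => h1 h2 [] h'; lra. Qed.

Lemma ar_le (R : realFieldType) (a d t : R) : a <= d -> 0 <= t -> a <= d + t.
Proof. move=> *; lra. Qed.

Lemma ar_iv1 (R : realFieldType) (a c d t : R) : a + c <= d -> a + t + c <= d + t.
Proof. move=> *; lra. Qed.

Lemma ar_iv2 (R : realFieldType) (a W Re Re1 d t : R) : Re = Re1 + t -> a + (W - Re) <= d -> a + (W - Re1) <= d + t.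
Proof. move=> *; lra. Qed.

Lemma ar_done (R : realFieldType) (c q k d t : R) : c <= q * k + d -> 0 <= t -> c <= q * k + (d + t).
Proof. move=> *; lra. Qed.

Lemma ar_inv (R : realFieldType) (c q k d : R) : 0 <= q -> c <= q * k + d -> c <= q * (k + 1) + d.
Proof. move=> *; rewrite mulrDr mulr1; lra. Qed.

Lemma ar_2a (R : realFieldType) (q a W wi : R) :
  q * 2%:R + (0 + a + (W - (a + wi))) <= q *+ 2 + (W - wi).
Proof. rewrite mulr_natr mulr2n; lra. Qed.

Lemma ar_2b (R : realFieldType) (q a W wi : R) :
  q * 2%:R + (0 + (W - (a + wi)) + a) <= q *+ 2 + (W - wi).
Proof. rewrite mulr_natr mulr2n; lra. Qed.

Lemma ar_1a (R : realFieldType) (q a W wi D : R) : a <= D ->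
  q * 1%:R + (0 + a + a + (W - (a + wi))) <= q + D + (W - wi).
Proof. rewrite mulr1; lra. Qed.

Lemma ar_1b (R : realFieldType) (q a W wi D : R) : W - (a + wi) <= D ->
  q * 1%:R + (0 + (W - (a + wi)) + (W - (a + wi)) + a) <= q + D + (W - wi).
Proof. rewrite mulr1; lra. Qed.

Section Main.
Variables (R : realFieldType) (n : nat) (Hn : (2 < n)%N)
    (w : 'I_n -> R) (q : R).
Hypotheses (w_pos : forall i, 0 < w i) (q_ge0 : 0 <= q).
Variable (dC : 'I_n -> 'I_n -> R).
Hypothesis (HdC : forall i v, is_dist (ringC_adj i) (ring_wt w) (hb Hn) v (dC i v)).
Variable (lo : 'I_n -> bool).
Hypothesis (Hlo : forall i : 'I_n, (0 < i < n.-1)%N ->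
       if lo i then dC i i <= dC i (ordS i) else dC i (ordS i) <= dC i i).
Variable (istar : 'I_n).
Hypothesis (Hmin : forall i, ring_c w q dC lo istar <= ring_c w q dC lo i).

Local Notation Rs := (Rs w).
Local Notation W := (W w).
Local Notation X := (X w).
Local Notation hb := (hb Hn).
Local Notation vtx := (vtx Hn).

Lemma dC_fwd (b : 'I_n) : dC b b <= Rs b.
Proof.
have [_ H] := HdC b b.
have [h1 h2 h3] := fwd_tele w (adj := ringC_adj b) (s := 0) (j := b) (ltnW (ltn_ord b))
   (fun t ht => @adjC_fwd _ Hn b t (ltac:(have := ltn_ord b; lia)) (ltac:(lia))).
rewrite add0n vtx_val in h2; rewrite add0n Rs0 subr0 in h3.
by have := H _ h1 h2; rewrite h3.
Qed.

Lemma dC_bwd (b : 'I_n) : (b.+1 < n)%N -> dC b (ordS b) <= W - Rs b.+1.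
Proof.
move=> hb1; have [_ H] := HdC b (ordS b).
have [h1 h2 h3] := bwd_tele w (adj := ringC_adj b) (s := n) (j := n - b.+1) (ltac:(lia))
   (fun m hm => @adjC_bwd _ Hn b m (ltac:(lia)) (ltac:(lia))).
have e1 : vtx (n - 0) = hb by apply: val_inj; rewrite /= subn0 modnn mod0n.
have e2 : vtx (n - (n - b.+1)) = ordS b.
  by rewrite (_ : (n - (n - b.+1) = b.+1)%N); [rewrite vtxS vtx_val | lia].
rewrite e1 in h1 h2 h3; rewrite e2 in h2.
rewrite (_ : (n - (n - b.+1) = b.+1)%N) ?Rsn in h3; last lia.
by have := H _ h1 h2; rewrite h3.
Qed.

Lemma rc_bounds (b : 'I_n) :
  [/\ ring_c w q dC lo b <= q *+ 2 + wC w b,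
      ring_c w q dC lo b <= q + wC w b + Rs b &
      ring_c w q dC lo b <= q + wC w b + (W - Rs b.+1)].
Proof.
have hR : 0 <= Rs b := Rs_ge0 w_pos b. have hR2 : Rs b.+1 <= W := Rs_leW Hn w_pos b.+1.
have hq : 0 <= q := q_ge0.
rewrite /ring_c; case: ifP => hmid.
  by split; rewrite ?mulr2n; lra.
have hb1 : (0 < b < n.-1)%N.
  by move/negbT: hmid; rewrite negb_or => /andP[/eqP h1 /eqP h2]; have := ltn_ord b; lia.
have := Hlo hb1; have := dC_fwd b; have := @dC_bwd b (ltac:(lia)).
rewrite /vmin; case: (lo b) => h1 h2 h3.
- split; first by rewrite ge_min lexx.
  + by rewrite ge_min; apply/orP; right; lra.
  + by rewrite ge_min; apply/orP; right; lra.
- split; first by rewrite ge_min lexx.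
  + by rewrite ge_min; apply/orP; right; lra.
  + by rewrite ge_min; apply/orP; right; lra.
Qed.


Definition cstar := ring_c w q dC lo istar.
Definition inA (b e : nat) (v : 'I_n) : bool := (v <= b)%N || (e <= v)%N.

Definition ArcInv (b e : nat) (pos vis : seq 'I_n) (d : R) : Prop :=
  [/\ (b < e <= n)%N, all (inA b e) pos, all (inA b e) vis,
      Rs b + (W - Rs e) <= d &
      ((size pos = 0)%N -> b = 0%N /\ e = n) /\
      ((size pos <= 1)%N ->
        ((W - Rs e) + Rs b) *+ 2 - X b (nth hb pos 0) <= d \/
        ((W - Rs e) + Rs b) *+ 2 + X b (nth hb pos 0) <= d)].

Definition Done (pos : seq 'I_n) (d : R) : Prop :=
  (0 < size pos)%N /\ cstar <= q * (size pos)%:R + d.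

Definition Inv (st : option (mstate R 'I_n)) : Prop :=
  match st with
  | None => True
  | Some (pos, vis, d) => (exists b e, (b.+1 < e)%N /\ ArcInv b e pos vis d) \/ Done pos d
  end.

Lemma X_bounds b e (p : 'I_n) : (b < e <= n)%N -> inA b e p ->
  - (W - Rs e) <= X b p /\ X b p <= Rs b.
Proof.
move=> hbe; rewrite /inA /X => /orP[] hp.
  rewrite hp; have := Rs_ge0 w_pos p; have := Rs_leW Hn w_pos e; have := Rs_mono Hn w_pos hp.
  move=> *; split; lra.
case: ifP => hp2.
  have := Rs_ge0 w_pos p; have := Rs_leW Hn w_pos e; have := Rs_mono Hn w_pos hp2.
  move=> *; split; lra.
have := Rs_ge0 w_pos b; have := Rs_leW Hn w_pos p; have := Rs_mono Hn w_pos hp.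
move=> *; split; lra.
Qed.

Lemma full_done b e pos vis d : ArcInv b e pos vis d -> e = b.+1 -> Done pos d.
Proof.
move=> [hbe hpos hvis hd [h0 h1]] he; subst e.
have hbn : (b < n)%N by clear -hbe; lia.
have hsz : (0 < size pos)%N.
  by case: (posnP (size pos)) => // /h0 [hb0 hn]; move: Hn; rewrite -hn hb0.
split => //.
set bo : 'I_n := Ordinal hbn.
have [c1 c2 c3] := rc_bounds bo.
have hc : cstar <= ring_c w q dC lo bo := Hmin bo.
have hw : wC w bo = Rs b + (W - Rs b.+1).
  by rewrite wC_eq (RsS_ord w bo) /=; ring.
have hq : 0 <= q := q_ge0.
case: (leqP (size pos) 1) => hs.
  have hs1 : size pos = 1%N by clear -hs hsz; lia.
  have hp : inA b b.+1 (nth hb pos 0) by apply: (allP hpos); apply: mem_nth; rewrite hs1.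
  have [x1 x2] := X_bounds hbe hp.
  rewrite hs1 mulr1; rewrite hw /= in c2 c3.
  by case: (h1 hs) => hh; lra.
have h2 : q *+ 2 <= q * (size pos)%:R.
  rewrite -[q *+ 2]mulr_natr; apply: (ler_wpM2l hq); rewrite ler_nat; clear bo c1 c2 c3 hc hw; lia.
rewrite hw /= in c1; lra.
Qed.

Lemma arc_or_done b e pos vis d : ArcInv b e pos vis d ->
  (exists b e, (b.+1 < e)%N /\ ArcInv b e pos vis d) \/ Done pos d.
Proof.
move=> H; case: (ltnP b.+1 e) => h; first by left; exists b, e.
right; apply: (full_done H); case: H => hbe *; lia.
Qed.

Lemma inA_mono b e b' e' x : (b <= b')%N -> (e' <= e)%N -> inA b e x -> inA b' e' x.
Proof. by rewrite /inA => h1 h2 /orP[] h; apply/orP; [left|right]; lia. Qed.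

Lemma in_step b e (p v : 'I_n) : (b.+1 < e <= n)%N -> inA b e p -> inA b e v ->
  ring_adj p v -> `|X b v - X b p| <= ring_wt w p v.
Proof.
move=> hbe hp hv hadj.
have hbn : (b < n)%N by lia.
have hS : forall x : 'I_n, (x : nat) = b -> inA b e (ordS x) = false.
  move=> x hx; rewrite /inA (valS Hn) hx; case: eqP => h; first lia.
  by apply/negbTE; rewrite negb_or; apply/andP; split; rewrite -ltnNge; lia.
have := @X_edge R n Hn w w_pos (Ordinal hbn) p v; apply.
rewrite /ringC_adj hadj /=; apply/negP => /orP[] /andP[/eqP h1 /eqP h2].
  by move: hv; rewrite h2 hS.
by move: hp; rewrite h2 hS.
Qed.

Lemma ext_fwd b e (p v : 'I_n) : (b.+1 < e <= n)%N -> inA b e p -> ~~ inA b e v ->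
  v = ordS p -> (p : nat) = b /\ (v : nat) = b.+1.
Proof.
move=> hbe hp hv hvp; have hv' : (v : nat) = (ordS p : nat) by rewrite hvp.
move: hp hv; rewrite /inA hv' (valS Hn); case: eqP => h /=; first by [].
move=> /orP[] h1; rewrite negb_or -!ltnNge => /andP[h2 h3]; lia.
Qed.

Lemma ext_bwd b e (p v : 'I_n) : (b.+1 < e <= n)%N -> inA b e p -> ~~ inA b e v ->
  p = ordS v -> (v : nat) = e.-1 /\ X b p = - (W - Rs e).
Proof.
move=> hbe hp hv hpv; have hp' : (p : nat) = (ordS v : nat) by rewrite hpv.
have hvn := ltn_ord v.
move: hp hv; rewrite /inA /X hp' (valS Hn); case: eqP => h /=.
  move=> _; rewrite negb_or -!ltnNge => /andP[h2 h3].
  have -> : e = n by lia.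
  by rewrite Rs0 Rsn; split; [lia | rewrite subrr oppr0].
move=> /orP[] h1; rewrite negb_or -!ltnNge => /andP[h2 h3]; first lia.
have hvb : (v.+1 <= b)%N = false by apply/negbTE; rewrite -ltnNge; lia.
rewrite hvb; have -> : v.+1 = e by lia.
split; [lia | ring].
Qed.

Lemma inv_step st m : Inv st -> Inv (step_state (ring_adj (n:=n)) (ring_wt w) hb st m).
Proof.
have hq : 0 <= q := q_ge0.
case: st => [[[pos vis] d]|] //=.
case: m => [|k v] /=.
- case=> [[b [e [hbe [h1 h2 h3 h4 [h5 h6]]]]]|[h1 h2]].
  + left; exists b, e; split => //; split => //.
    * by rewrite all_rcons h2 /inA hb0 leq0n.
    * by rewrite /= h3 /inA hb0 leq0n.
    * split; first by rewrite size_rcons.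
      rewrite size_rcons => hs; have hp0 : pos = [::] by case: pos hs {h2 h5 h6}.
      by move: h6; rewrite hp0 /= => h6; apply: h6.
  + right; split; first by rewrite size_rcons.
    by rewrite size_rcons -addn1 natrD; apply: ar_inv.
case: ifP => // /andP[hk hadj] H.
have hsz : size (set_nth hb pos k v) = size pos by rewrite size_set_nth; apply/maxn_idPr.
have hwt := ring_wt_ge0 w_pos (nth hb pos k) v.
case: H => [[b [e [hbe [h1 h2 h3 h4 [h5 h6]]]]]|[h1 h2]]; last first.
  by right; rewrite /Done hsz; split => //; apply: ar_done.
have hp : inA b e (nth hb pos k) := allP h2 _ (mem_nth hb hk).
have hbe' : (b.+1 < e <= n)%N by clear -hbe h1; lia.
case hv : (inA b e v).
- left; exists b, e; split => //; split => //.
  + exact: all_set_nth.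
  + by rewrite /= hv.
  + exact: ar_le.
  split; first by move=> h; move: hk; rewrite -hsz h.
  rewrite hsz => hs1; have hk0 : k = 0%N by apply/eqP; rewrite -leqn0 -ltnS (leq_trans hk hs1).
  subst k; rewrite nth_set_nth /=.
  have := in_step hbe' hp hv hadj; rewrite ler_norml => /andP[x1 x2].
  by apply: ar_in x1 x2 (h6 hs1).
have hRb := Rs_ge0 w_pos b; have hRe := Rs_leW Hn w_pos e.
case/orP: hadj => /eqP hvp.
- have [hpb hvb] := ext_fwd hbe' hp (negbT hv) hvp.
  have hw : ring_wt w (nth hb pos k) v = w (nth hb pos k) by rewrite (ring_wt_fwd w hvp).
  have hR1 : Rs b.+1 = Rs b + w (nth hb pos k) by rewrite -hpb RsS_ord.
  apply: (@arc_or_done b.+1 e); split.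
  + clear -hbe h1; lia.
  + apply: all_set_nth => //; first by apply: sub_all h2 => x; apply: inA_mono.
    by rewrite /inA hvb leqnn.
  + by rewrite /= /inA hvb leqnn /=; apply: sub_all h3 => x; apply: inA_mono.
  + by rewrite hw hR1; apply: ar_iv1.
  split; first by move=> h; move: hk; rewrite -hsz h.
  rewrite hsz => hs1; have hk0 : k = 0%N by apply/eqP; rewrite -leqn0 -ltnS (leq_trans hk hs1).
  subst k; rewrite nth_set_nth /=; left.
  have hX : X b.+1 v = Rs b.+1 by rewrite /X hvb leqnn.
  have hXp : X b (nth hb pos 0) = Rs b by rewrite /X hpb leqnn.
  have hh := h6 hs1; rewrite hXp in hh.
  by rewrite hX hR1 hw; apply: ar_fwd hRb hh.
- have [hvb hXp] := ext_bwd hbe' hp (negbT hv) hvp.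
  have hw : ring_wt w (nth hb pos k) v = w v by rewrite (ring_wt_bwd Hn w hvp).
  have hR1 : Rs e = Rs e.-1 + w v.
    by rewrite -hvb -RsS_ord; congr (Rs _); clear -hvb hbe; lia.
  have hRe1 := Rs_leW Hn w_pos e.-1.
  apply: (@arc_or_done b e.-1); split.
  + clear -hbe h1; lia.
  + apply: all_set_nth => //; first by apply: sub_all h2 => x; apply: inA_mono => //; exact: leq_pred.
    by rewrite /inA hvb leqnn orbT.
  + rewrite /= /inA hvb leqnn orbT /=; apply: sub_all h3 => x; apply: inA_mono => //; exact: leq_pred.
  + by rewrite hw; apply: ar_iv2 hR1 h4.
  split; first by move=> h; move: hk; rewrite -hsz h.
  rewrite hsz => hs1; have hk0 : k = 0%N by apply/eqP; rewrite -leqn0 -ltnS (leq_trans hk hs1).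
  subst k; rewrite nth_set_nth /=; right.
  have hX : X b v = Rs e.-1 - W.
    by rewrite /X -hvb; have -> : (v <= b)%N = false by apply/negbTE; rewrite -ltnNge; move: hv; rewrite /inA hvb => /negbT; rewrite negb_or -!ltnNge => /andP[]; clear; lia.
  have hh := h6 hs1; rewrite hXp in hh.
  by rewrite hX hw; apply: (ar_bwd hR1 hRe hh).
Qed.

Lemma inv_foldl S st : Inv st -> Inv (foldl (step_state (ring_adj (n:=n)) (ring_wt w) hb) st S).
Proof. by elim: S st => //= m S IH st H; apply: IH; apply: inv_step. Qed.

Lemma inv_init : Inv (Some ([::], [::], 0)).
Proof.
left; exists 0%N, n; split; first exact: ltnW Hn.
have hX : X 0 hb = 0 by rewrite /X hb0 Rs0.
split => //=; first by rewrite (ltnW (ltnW Hn)) leqnn.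
  by rewrite Rs0 Rsn subrr addr0.
split => // _; left; by rewrite hX Rs0 Rsn subrr addr0 mul0rn subr0 lexx.
Qed.

Lemma lower T : explores (ring_adj (n:=n)) (ring_wt w) hb T ->
  cstar <= cost (ring_adj (n:=n)) (ring_wt w) hb q T.
Proof.
case=> pos [vis [d [hrun hall]]].
have := inv_foldl T inv_init; rewrite /cost; rewrite /run in hrun *; rewrite hrun /=.
case=> [[b [e [hbe [h1 h2 h3 _ _]]]] | [_ hd]] //.
have hb1 : (b.+1 < n)%N by clear -hbe h1; lia.
have := allP h3 (vtx b.+1) (hall _); rewrite /inA /= modn_small //.
by move=> /orP[] h; exfalso; clear -h hbe; lia.
Qed.


Local Notation stp := (step_state (ring_adj (n:=n)) (ring_wt w) hb).

Lemma walk_step a pos vis d u p rest : (a < size pos)%N -> nth hb pos a = u ->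
  path (ring_adj (n:=n)) u p ->
  exists pos', [/\ size pos' = size pos, nth hb pos' a = last u p &
  foldl stp (Some (pos, vis, d)) ([seq Step a x | x <- p] ++ rest) =
  foldl stp (Some (pos', rev p ++ vis, d + walk_wt (ring_wt w) u p)) rest].
Proof.
move=> ha hu hp; have [pos' [h1 h2 h3]] := run_walk w vis d ha hu hp.
by exists pos'; rewrite foldl_cat h3.
Qed.

Lemma vtx_eq k m : (k %% n = m %% n)%N -> vtx k = vtx m.
Proof. by move=> h; apply: val_inj. Qed.

Definition fw j := [seq vtx t | t <- iota 1 j].
Definition bw j := [seq vtx (n - t) | t <- iota 1 (n - j)].
Definition bk i := [seq vtx (i - t) | t <- iota 1 i].
Definition fw0 i := [seq vtx t | t <- iota i.+2 (n - i.+1)].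

Lemma fwdE a j : fwd Hn a j = [seq Step a x | x <- fw j].
Proof. by rewrite /fwd /fw -map_comp. Qed.
Lemma bwdE a j : bwd Hn a j = [seq Step a x | x <- bw j].
Proof. by rewrite /bwd /bw -map_comp. Qed.
Lemma back_to0E a i : back_to0 Hn a i = [seq Step a x | x <- bk i].
Proof. by rewrite /back_to0 /bk -map_comp. Qed.
Lemma fwd_to0E a i : fwd_to0 Hn a i = [seq Step a x | x <- fw0 i].
Proof. by rewrite /fwd_to0 /fw0 -map_comp. Qed.

Lemma fw_info j : (j <= n)%N ->
  [/\ path (ring_adj (n:=n)) hb (fw j), last hb (fw j) = vtx j & walk_wt (ring_wt w) hb (fw j) = Rs j].
Proof.
move=> hj; have [h1 h2 h3] := fwd_tele w (adj := ring_adj (n:=n)) (s := 0) (j := j) hj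
   (fun t _ => adj_fwd Hn t).
by rewrite add0n Rs0 subr0 in h2 h3.
Qed.

Lemma bw_info j : (j <= n)%N ->
  [/\ path (ring_adj (n:=n)) hb (bw j), last hb (bw j) = vtx j & walk_wt (ring_wt w) hb (bw j) = W - Rs j].
Proof.
move=> hj; have [h1 h2 h3] := bwd_tele w (adj := ring_adj (n:=n)) (s := n) (j := n - j) (ltac:(lia))
   (fun t _ => adj_bwd Hn t).
have e1 : vtx (n - 0) = hb by apply: vtx_eq; rewrite subn0 modnn mod0n.
have e2 : (n - (n - j) = j)%N by lia.
by rewrite e1 e2 Rsn in h1 h2 h3.
Qed.

Lemma bk_info i : (i <= n)%N ->
  [/\ path (ring_adj (n:=n)) (vtx i) (bk i), last (vtx i) (bk i) = hb & walk_wt (ring_wt w) (vtx i) (bk i) = Rs i].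
Proof.
move=> hi; have [h1 h2 h3] := bwd_tele w (adj := ring_adj (n:=n)) (s := i) (j := i) (ltac:(lia))
   (fun t _ => adj_bwd Hn t).
by rewrite subn0 subnn Rs0 subr0 in h1 h2 h3.
Qed.

Lemma fw0_info i : (i < n)%N ->
  [/\ path (ring_adj (n:=n)) (vtx i.+1) (fw0 i), last (vtx i.+1) (fw0 i) = hb &
      walk_wt (ring_wt w) (vtx i.+1) (fw0 i) = W - Rs i.+1].
Proof.
move=> hi; have [h1 h2 h3] := fwd_tele w (adj := ring_adj (n:=n)) (s := i.+1) (j := n - i.+1) (ltac:(lia))
   (fun t _ => adj_fwd Hn t).
have e : (i.+1 + (n - i.+1) = n)%N by lia.
rewrite e Rsn vtxn in h2 h3; by split.
Qed.

Lemma mem_fw j (v : 'I_n) : (0 < v <= j)%N -> v \in fw j.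
Proof.
move=> h; rewrite -(vtx_val Hn v); apply: map_f; rewrite mem_iota; lia.
Qed.

Lemma mem_bw j (v : 'I_n) : (0 < j <= v)%N -> v \in bw j.
Proof.
move=> h; have hv := ltn_ord v.
have -> : v = vtx (n - (n - v)) by apply: val_inj; rewrite /= (_ : (n - (n - v) = v)%N) ?modn_small //; lia.
apply: map_f; rewrite mem_iota; lia.
Qed.


Lemma foldl_inv pos vis d L :
  foldl stp (Some (pos, vis, d)) (Invoke :: L) = foldl stp (Some (rcons pos hb, hb :: vis, d)) L.
Proof. by []. Qed.

Lemma upper_0 : (istar : nat) = 0%N ->
  explores (ring_adj (n:=n)) (ring_wt w) hb (Invoke :: bwd Hn 0 1) /\
  cost (ring_adj (n:=n)) (ring_wt w) hb q (Invoke :: bwd Hn 0 1) <= cstar.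
Proof.
move=> hi.
have [h1 h2 h3] := @bw_info 1 (ltnW (ltnW Hn)).
have [pos' [s1 s2 s3]] := run_walk w (a := 0) (pos := [:: hb]) [:: hb] 0 (erefl _) (erefl _) h1.
rewrite /explores /cost /run bwdE foldl_inv /= s3 s1 h3.
split.
  exists pos', (rev (bw 1) ++ [:: hb]), (0 + (W - Rs 1)); split => // v.
  rewrite mem_cat mem_rev; case: (posnP v) => hv.
    by apply/orP; right; rewrite inE; apply/eqP; apply: ord_inj; rewrite hv hb0.
  by apply/orP; left; apply: mem_bw; rewrite hv.
rewrite /cstar /ring_c hi eqxx /= wC_eq.
have -> : Rs 1 = w istar by rewrite -hi RsS_ord hi Rs0 add0r.
by rewrite mulr1 add0r.
Qed.


Lemma cover_cases i (v : 'I_n) : (i < n)%N -> [\/ v = hb, v \in fw i | v \in bw i.+1].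
Proof.
move=> hi; case: (posnP v) => hv.
  by apply: Or31; apply: ord_inj; rewrite hv hb0.
case: (leqP v i) => h; first by apply: Or32; apply: mem_fw; rewrite hv h.
by apply: Or33; apply: mem_bw.
Qed.

Lemma upper_last : (istar : nat) = n.-1 ->
  explores (ring_adj (n:=n)) (ring_wt w) hb (Invoke :: fwd Hn 0 n.-1) /\
  cost (ring_adj (n:=n)) (ring_wt w) hb q (Invoke :: fwd Hn 0 n.-1) <= cstar.
Proof.
move=> hi.
have [h1 h2 h3] := @fw_info n.-1 (leq_pred n).
have [pos' [s1 s2 s3]] := run_walk w (a := 0) (pos := [:: hb]) [:: hb] 0 (erefl _) (erefl _) h1.
rewrite /explores /cost /run fwdE foldl_inv /= s3 s1 h3.
split.
  exists pos', (rev (fw n.-1) ++ [:: hb]), (0 + Rs n.-1); split => // v.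
  rewrite mem_cat mem_rev inE.
  have := ltn_ord v; case: (posnP v) => hv hvn.
    by apply/orP; right; apply/eqP; apply: ord_inj; rewrite hv hb0.
  by apply/orP; left; apply: mem_fw; rewrite hv /=; lia.
have e1 : Rs n = Rs istar + w istar.
  by rewrite -RsS_ord; congr (Rs _); have := ltn_ord istar; lia.
rewrite /cstar /ring_c -hi eqxx orbT /= wC_eq -Rsn e1.
by rewrite mulr1 add0r addrK.
Qed.

Lemma dmin_lo (i : 'I_n) : Rs i <= dC i i.
Proof.
have [[p [hp [hl hw]]] _] := HdC i i.
have := X_walk Hn w_pos hp; rewrite hl hw /X hb0 leqnn leq0n Rs0 subr0.
by apply: le_trans; apply: ler_norm.
Qed.

Lemma dmin_nlo (i : 'I_n) : (i.+1 < n)%N -> W - Rs i.+1 <= dC i (ordS i).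
Proof.
move=> hi; have [[p [hp [hl hw]]] _] := HdC i (ordS i).
have := X_walk Hn w_pos hp; rewrite hl hw /X hb0 leq0n Rs0 subr0 (valS Hn).
have -> : (i.+1 == n) = false by apply/negbTE; rewrite neq_ltn hi.
rewrite ltnn; apply: le_trans.
by rewrite -normrN opprB; apply: ler_norm.
Qed.


Lemma upper : explores (ring_adj (n:=n)) (ring_wt w) hb (ringOffline Hn w q dC lo istar) /\
  cost (ring_adj (n:=n)) (ring_wt w) hb q (ringOffline Hn w q dC lo istar) <= cstar.
Proof.
rewrite /ringOffline; case: ifP => [/eqP|] h0; first exact: upper_0.
case: ifP => [/eqP|] h1; first exact: upper_last.
have hin : (istar.+1 < n)%N.
  by move/negbT: h1 => /eqP h1; have := ltn_ord istar; clear -h1; lia.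
have hRS := RsS_ord w istar.
have ec : cstar = Num.min (q *+ 2 + wC w istar) (q + dC istar (vmin lo istar) + wC w istar).
  by rewrite /cstar /ring_c h0 h1.
have hile : (istar <= n)%N by apply: ltnW.
have [a1 a2 a3] := fw_info hile.
have [b1 b2 b3] := @bw_info istar.+1 (ltnW hin).
rewrite /= /explores /cost /run ec wC_eq.
case: ifP => hlt; case hl: (lo istar) => /=.
- rewrite ?foldl_inv fwdE bwdE.
  have [pos1 [s1 s2 s3]] := walk_step [:: hb] 0 (Invoke :: [seq Step 1 x | x <- bw istar.+1])
     (a := 0) (pos := [:: hb]) (u := hb) (erefl _) (erefl _) a1.
  rewrite s3 foldl_inv.
  have hsz : (1 < size (rcons pos1 hb))%N by rewrite size_rcons s1.
  have hn1 : nth hb (rcons pos1 hb) 1 = hb by rewrite nth_rcons s1 ltnn eqxx.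
  have [pos2 [t1 t2 t3]] := run_walk w (a := 1) (hb :: rev (fw istar) ++ [:: hb]) (0 + Rs istar) hsz hn1 b1.
  rewrite a3 t3 t1 size_rcons s1 b3.
  split.
    exists pos2; do 2 eexists; split; first reflexivity.
    move=> v; have [->|h|h] := cover_cases v (ltn_ord istar); rewrite !(mem_cat, mem_rev, inE) ?h ?eqxx ?orbT //.
  by rewrite min_l ?(ltW hlt) //= hRS; apply: ar_2a.
- rewrite ?foldl_inv fwdE bwdE.
  have [pos1 [s1 s2 s3]] := walk_step [:: hb] 0 (Invoke :: [seq Step 1 x | x <- fw istar])
     (a := 0) (pos := [:: hb]) (u := hb) (erefl _) (erefl _) b1.
  rewrite s3 b3 foldl_inv.
  have hsz : (1 < size (rcons pos1 hb))%N by rewrite size_rcons s1.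
  have hn1 : nth hb (rcons pos1 hb) 1 = hb by rewrite nth_rcons s1 ltnn eqxx.
  have [pos2 [t1 t2 t3]] := run_walk w (a := 1) (hb :: rev (bw istar.+1) ++ [:: hb]) (0 + (W - Rs istar.+1)) hsz hn1 a1.
  rewrite t3 a3 t1 size_rcons s1.
  split.
    exists pos2; do 2 eexists; split; first reflexivity.
    move=> v; have [->|h|h] := cover_cases v (ltn_ord istar); rewrite !(mem_cat, mem_rev, inE) ?h ?eqxx ?orbT //.
  by rewrite min_l ?(ltW hlt) //= hRS; apply: ar_2b.
- rewrite ?foldl_inv fwdE back_to0E bwdE.
  have [c1 c2 c3] := bk_info hile.
  have [pos1 [s1 s2 s3]] := walk_step [:: hb] 0 ([seq Step 0 x | x <- bk istar] ++ [seq Step 0 x | x <- bw istar.+1])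
     (a := 0) (pos := [:: hb]) (u := hb) (erefl _) (erefl _) a1.
  rewrite s3 a3.
  have hsz : (0 < size pos1)%N by rewrite s1.
  have [pos2 [t1 t2 t3]] := walk_step (rev (fw istar) ++ [:: hb]) (0 + Rs istar) [seq Step 0 x | x <- bw istar.+1]
     (a := 0) (pos := pos1) (u := vtx istar) hsz (etrans s2 a2) c1.
  rewrite t3 c3.
  have hsz2 : (0 < size pos2)%N by rewrite t1 s1.
  have [pos3 [u1 u2 u3]] := run_walk w (a := 0) (rev (bk istar) ++ rev (fw istar) ++ [:: hb]) (0 + Rs istar + Rs istar)
     hsz2 (etrans t2 c2) b1.
  rewrite u3 b3 u1 t1 s1.
  split.
    exists pos3; do 2 eexists; split; first reflexivity.
    move=> v; have [->|h|h] := cover_cases v (ltn_ord istar); rewrite !(mem_cat, mem_rev, inE) ?h ?eqxx ?orbT //.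
  rewrite min_r; last by rewrite leNgt hlt.
  by rewrite /vmin hl /= hRS; apply: ar_1a; apply: dmin_lo.
- rewrite ?foldl_inv fwdE fwd_to0E bwdE.
  have [c1 c2 c3] := fw0_info (ltn_ord istar).
  have [pos1 [s1 s2 s3]] := walk_step [:: hb] 0 ([seq Step 0 x | x <- fw0 istar] ++ [seq Step 0 x | x <- fw istar])
     (a := 0) (pos := [:: hb]) (u := hb) (erefl _) (erefl _) b1.
  rewrite s3 b3.
  have hsz : (0 < size pos1)%N by rewrite s1.
  have [pos2 [t1 t2 t3]] := walk_step (rev (bw istar.+1) ++ [:: hb]) (0 + (W - Rs istar.+1)) [seq Step 0 x | x <- fw istar]
     (a := 0) (pos := pos1) (u := vtx istar.+1) hsz (etrans s2 b2) c1.
  rewrite t3 c3.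
  have hsz2 : (0 < size pos2)%N by rewrite t1 s1.
  have [pos3 [u1 u2 u3]] := run_walk w (a := 0) (rev (fw0 istar) ++ rev (bw istar.+1) ++ [:: hb]) (0 + (W - Rs istar.+1) + (W - Rs istar.+1))
     hsz2 (etrans t2 c2) a1.
  rewrite u3 a3 u1 t1 s1.
  split.
    exists pos3; do 2 eexists; split; first reflexivity.
    move=> v; have [->|h|h] := cover_cases v (ltn_ord istar); rewrite !(mem_cat, mem_rev, inE) ?h ?eqxx ?orbT //.
  rewrite min_r; last by rewrite leNgt hlt.
  rewrite /vmin hl /= hRS; apply: ar_1b; rewrite -hRS; exact: dmin_nlo.
Qed.

End Main.

Theorem mainTheorem1 (R : realFieldType) (n : nat) (Hn : (2 < n)%N)
    (w : 'I_n -> R) (q : R)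
    (w_pos : forall i, 0 < w i) (q_ge0 : 0 <= q)
    (* dC i v = d_{C_i}(v_0, v) *)
    (dC : 'I_n -> 'I_n -> R)
    (HdC : forall i v, is_dist (ringC_adj i) (ring_wt w) (hb Hn) v (dC i v))
    (* choice of v_i^min / v_i^max, consistent with the distances in C_i *)
    (lo : 'I_n -> bool)
    (Hlo : forall i : 'I_n, (0 < i < n.-1)%N ->
       if lo i then dC i i <= dC i (ordS i) else dC i (ordS i) <= dC i i)
    (* i^* minimizes c_i *)
    (istar : 'I_n)
    (Hmin : forall i, ring_c w q dC lo istar <= ring_c w q dC lo i) :
  explores (ring_adj (n:=n)) (ring_wt w) (hb Hn) (ringOffline Hn w q dC lo istar) /\
  forall T : seq (move 'I_n),
    explores (ring_adj (n:=n)) (ring_wt w) (hb Hn) T ->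
    cost (ring_adj (n:=n)) (ring_wt w) (hb Hn) q (ringOffline Hn w q dC lo istar)
    <= cost (ring_adj (n:=n)) (ring_wt w) (hb Hn) q T.
Proof.
have [U1 U2] := upper w_pos q_ge0 HdC lo istar.
split => // T HT.
apply: (le_trans U2); exact: (lower w_pos q_ge0 HdC Hlo Hmin HT).
Qed.
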